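(* For every $n\ge1$, the variety $\mathsf{PMV}_n=\mathbb{HSP}(\mathbf{P\L}_n)$ generated by $\mathbf{P\L}_n$ coincides with the quasi-variety $\mathbb{ISP}(\mathbf{P\L}_n)$ generated by $\mathbf{P\L}_n$. In other words, every member of $\mathsf{PMV}_n$ is isomorphic to a subalgebra of a (possibly empty) direct power of $\mathbf{P\L}_n$.
   Context: For $n\ge 1$, the algebra $\mathbf{P\L}_n=\langle\{0,\tfrac1n,\dots,\tfrac{n-1}{n},1\},\wedge,\vee,\odot,\oplus,0,1\rangle$ has $\wedge=\min$, $\vee=\max$, $x\odot y=\max\{0,x+y-1\}$ and $x\oplus y=\min\{1,x+y\}$. The variety it generates is denoted $\mathsf{PMV}_n$. *)

(* Defs.v *)
From mathcomp Require Import all_boot.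
Set Implicit Arguments. Unset Strict Implicit. Unset Printing Implicit Defensive.

Record alg := Alg {
  car :> Type;
  a_meet : car -> car -> car;
  a_join : car -> car -> car;
  a_odot : car -> car -> car;
  a_oplus : car -> car -> car;
  a_zero : car;
  a_one : car }.

Definition is_hom (A B : alg) (f : A -> B) : Prop :=
  (forall x y, f (a_meet x y) = a_meet (f x) (f y)) /\
  (forall x y, f (a_join x y) = a_join (f x) (f y)) /\
  (forall x y, f (a_odot x y) = a_odot (f x) (f y)) /\
  (forall x y, f (a_oplus x y) = a_oplus (f x) (f y)) /\
  f (a_zero A) = a_zero B /\
  f (a_one A) = a_one B.

Definition power_alg (I : Type) (A : alg) : alg :=
  @Alg (I -> A)
    (fun x y i => a_meet (x i) (y i))
    (fun x y i => a_join (x i) (y i))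
    (fun x y i => a_odot (x i) (y i))
    (fun x y i => a_oplus (x i) (y i))
    (fun _ => a_zero A)
    (fun _ => a_one A).

Record closed (A : alg) (S : A -> Prop) : Prop := Closed {
  cl_meet : forall x y, S x -> S y -> S (a_meet x y);
  cl_join : forall x y, S x -> S y -> S (a_join x y);
  cl_odot : forall x y, S x -> S y -> S (a_odot x y);
  cl_oplus : forall x y, S x -> S y -> S (a_oplus x y);
  cl_zero : S (a_zero A);
  cl_one : S (a_one A) }.

Definition sub_alg (A : alg) (S : A -> Prop) (HS : closed S) : alg :=
  @Alg {x : A | S x}
    (fun x y => exist S (a_meet (proj1_sig x) (proj1_sig y))
                  (cl_meet HS (proj2_sig x) (proj2_sig y)))
    (fun x y => exist S (a_join (proj1_sig x) (proj1_sig y))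
                  (cl_join HS (proj2_sig x) (proj2_sig y)))
    (fun x y => exist S (a_odot (proj1_sig x) (proj1_sig y))
                  (cl_odot HS (proj2_sig x) (proj2_sig y)))
    (fun x y => exist S (a_oplus (proj1_sig x) (proj1_sig y))
                  (cl_oplus HS (proj2_sig x) (proj2_sig y)))
    (exist S (a_zero A) (cl_zero HS))
    (exist S (a_one A) (cl_one HS)).

Definition in_HSP (K A : alg) : Prop :=
  exists (I : Type) (S : power_alg I K -> Prop) (HS : closed S)
         (f : sub_alg HS -> A),
    is_hom f /\ (forall a : A, exists b, f b = a).

Definition in_ISP (K A : alg) : Prop :=
  exists (I : Type) (f : A -> power_alg I K), is_hom f /\ injective f.

(* The element k/n of {0, 1/n, ..., 1} is encoded by its
   numerator k : 'I_n.+1, so that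
     k/n /\ l/n = min(k,l)/n,   k/n \/ l/n = max(k,l)/n,
     k/n (.) l/n = max(0, k+l-n)/n,   k/n (+) l/n = min(n, k+l)/n,
     0 = 0/n,  1 = n/n.  (Truncated subtraction on nat gives the max with 0.) *)
Definition PL (n : nat) : alg :=
  @Alg 'I_n.+1
    (fun k l => inord (minn k l))
    (fun k l => inord (maxn k l))
    (fun k l => inord (k + l - n))
    (fun k l => inord (minn n (k + l)))
    (inord 0)
    (inord n).

(* Main.v *)
Require Import Defs.
From mathcomp Require Import all_boot zify.
From mathcomp Require boolp classical_sets.
From Stdlib Require Import ProofIrrelevance FunctionalExtensionality Classical.
Set Implicit Arguments. Unset Strict Implicit. Unset Printing Implicit Defensive.

Inductive tm : Type :=
  V of nat | Mt of tm & tm | Jn of tm & tm | Od of tm & tm | Op of tm & tm | Z0 | O1.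

Fixpoint ev (A : alg) (e : nat -> A) (t : tm) : A :=
  match t with
  | V i => e i
  | Mt s u => a_meet (ev e s) (ev e u)
  | Jn s u => a_join (ev e s) (ev e u)
  | Od s u => a_odot (ev e s) (ev e u)
  | Op s u => a_oplus (ev e s) (ev e u)
  | Z0 => a_zero A
  | O1 => a_one A
  end.

Lemma ev_hom (A B : alg) (f : A -> B) : is_hom f ->
  forall e t, f (ev e t) = ev (fun i => f (e i)) t.
Proof.
case=> hm [hj [ho [hp [h0 h1]]]] e.
elim=> //= [s IHs u IHu|s IHs u IHu|s IHs u IHu|s IHs u IHu].
- by rewrite hm IHs IHu.
- by rewrite hj IHs IHu.
- by rewrite ho IHs IHu.
- by rewrite hp IHs IHu.
Qed.

Lemma ev_pow I (K : alg) (e : nat -> power_alg I K) t i :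
  ev e t i = ev (fun j => e j i) t.
Proof. by elim: t => //= s IHs u IHu; rewrite IHs IHu. Qed.

Lemma ev_sub I (K : alg) (S : power_alg I K -> Prop) (HS : Defs.closed S)
  (e : nat -> sub_alg HS) t :
  proj1_sig (ev e t) = ev (A := power_alg I K) (fun j => proj1_sig (e j)) t.
Proof. by elim: t => //= s IHs u IHu; rewrite IHs IHu. Qed.

Lemma sig_eq (T : Type) (P : T -> Prop) (x y : {a | P a}) :
  proj1_sig x = proj1_sig y -> x = y.
Proof. case: x y => [x px] [y py] /= exy; subst; f_equal; apply: proof_irrelevance. Qed.

Lemma transfer (K A : alg) I (S : power_alg I K -> Prop) (HS : Defs.closed S)
  (f : sub_alg HS -> A) : is_hom f -> (forall a, exists b, f b = a) ->
  forall t1 t2, (forall e : nat -> K, ev e t1 = ev e t2) ->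
  forall e : nat -> A, ev e t1 = ev e t2.
Proof.
move=> hf sf t1 t2 H e.
pose e' := fun j => proj1_sig (boolp.cid (sf (e j))).
have -> : e = fun j => f (e' j).
  by apply: functional_extensionality => j; rewrite /e'; case: boolp.cid.
rewrite -!ev_hom //; congr f; apply: sig_eq; rewrite !ev_sub.
by apply: functional_extensionality => i; rewrite !ev_pow.
Qed.

Definition stp n (b : bool) v := if b then minn n (v + v) else v + v - n.
Fixpoint nf n (L : seq bool) v := if L is b :: L' then nf n L' (stp n b v) else v.

Lemma nf_mono n L v w : v <= w -> nf n L v <= nf n L w.
Proof. elim: L v w => //= b L IH v w vw; apply: IH; rewrite /stp; case: b; lia. Qed.

Lemma nf_le n L v : v <= n -> nf n L v <= n.
Proof. elim: L v => //= b L IH v vn; apply: IH; rewrite /stp; case: b; lia. Qed.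

Lemma exL_aux n m : forall lo hi, lo < hi <= n ->
  3 * n - (hi - lo) + (if lo == 0 then 0 else 1) + (if hi == n then 0 else 1) < m ->
  exists L, nf n L lo = 0 /\ nf n L hi = n.
Proof.
elim: m => [|m IH] lo hi lh mu; first by rewrite ltn0 in mu.
have [/andP[/eqP l0 /eqP h0]|nd] := boolP ((lo == 0) && (hi == n)).
  by exists [::]; rewrite l0 h0.
pose b := lo + hi <= n.
have [L [HL1 HL2]] : exists L, nf n L (stp n b lo) = 0 /\ nf n L (stp n b hi) = n.
  apply: IH; rewrite /b /stp; case: (leqP (lo + hi) n) => hb; move: nd mu;
  by repeat case: eqP => ? /=; lia.
by exists (b :: L).
Qed.
Lemma exL n k : exists L, 0 < k <= n -> nf n L k.-1 = 0 /\ nf n L k = n.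
Proof.
have [/andP[k0 kn]|] := boolP (0 < k <= n); last by move=> /negP h; exists [::] => hk; exfalso; apply: h.
have [L HL] := @exL_aux n (4 * n + 3) k.-1 k ltac:(lia) ltac:(repeat case: eqP; lia).
by exists L.
Qed.


Section Tau.
Variable n : nat.

Definition Lk k : seq bool := proj1_sig (boolp.cid (exL n k)).
Lemma LkP k : 0 < k <= n -> nf n (Lk k) k.-1 = 0 /\ nf n (Lk k) k = n.
Proof. rewrite /Lk; case: boolp.cid => L HL /=; exact: HL. Qed.

Fixpoint taut (L : seq bool) (t : tm) : tm :=
  if L is b :: L' then taut L' (if b then Op t t else Od t t) else t.

Definition tau k t := if k == 0 then O1 else if k <= n then taut (Lk k) t else Z0.
Arguments tau : simpl never.

Definition tauA (A : alg) k (a : A) := ev (fun _ => a) (tau k (V 0)).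

Lemma ev_taut (A : alg) (e : nat -> A) L s :
  ev e (taut L s) = ev (fun _ => ev e s) (taut L (V 0)).
Proof.
elim: L e s => //= b L IH e s; rewrite IH [in RHS]IH; congr ev.
by apply: functional_extensionality => i; case: b.
Qed.

Lemma ev_tau (A : alg) (e : nat -> A) k s : ev e (tau k s) = tauA k (ev e s).
Proof. rewrite /tauA /tau; case: eqP => // _; case: leqP => // _; exact: ev_taut. Qed.

Lemma tauA0 (A : alg) (a : A) : tauA 0 a = a_one A.
Proof. by []. Qed.
Lemma tauA_big (A : alg) k (a : A) : n < k -> tauA k a = a_zero A.
Proof. by rewrite /tauA /tau; case: eqP => [->|_] //; case: leqP. Qed.

Lemma vmeet (x y : PL n) : val (a_meet x y) = minn x y.
Proof. by rewrite /= inordK //; have := ltn_ord x; lia. Qed.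
Lemma vjoin (x y : PL n) : val (a_join x y) = maxn x y.
Proof. by rewrite /= inordK //; have := ltn_ord x; have := ltn_ord y; lia. Qed.
Lemma vodot (x y : PL n) : val (a_odot x y) = x + y - n.
Proof. by rewrite /= inordK //; have := ltn_ord x; have := ltn_ord y; lia. Qed.
Lemma voplus (x y : PL n) : val (a_oplus x y) = minn n (x + y).
Proof. by rewrite /= inordK //; lia. Qed.
Lemma vzero : val (a_zero (PL n)) = 0.
Proof. by rewrite /= inordK. Qed.
Lemma vone : val (a_one (PL n)) = n.
Proof. by rewrite /= inordK. Qed.

Lemma vtaut (e : nat -> PL n) L s : val (ev e (taut L s)) = nf n L (val (ev e s)).
Proof.
elim: L s => //= b L IH s; rewrite IH; congr nf.
by case: b; rewrite /= ?voplus ?vodot.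
Qed.

Definition thr k v := if k <= v then n else 0.

Lemma tauP (e : nat -> PL n) k s : val (ev e (tau k s)) = thr k (val (ev e s)).
Proof.
set v := val (ev e s); have vn : v < n.+1 := ltn_ord (ev e s).
rewrite /tau /thr; case: eqP => [->|k0]; first by rewrite /= vone.
case: (leqP k n) => kn; last first.
  have -> : ev e Z0 = a_zero (PL n) by [].
  by rewrite vzero; case: (leqP k v) => kv //; lia.
rewrite vtaut -/v.
have [H1 H2] := LkP (k := k) ltac:(lia).
case: leqP => kv.
  apply/eqP; rewrite eqn_leq nf_le //.
  by rewrite -[X in X <= _]H2 nf_mono.
by apply/eqP; rewrite -leqn0 -H1 nf_mono //; lia.
Qed.
End Tau.


Section Ids.
Variable n : nat.
Local Notation tau := (tau n).
Local Notation x := (V 0). Local Notation y := (V 1). Local Notation w := (V 2).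

Lemma vMt (e : nat -> PL n) s u : val (ev e (Mt s u)) = minn (val (ev e s)) (val (ev e u)).
Proof. exact: vmeet. Qed.
Lemma vJn (e : nat -> PL n) s u : val (ev e (Jn s u)) = maxn (val (ev e s)) (val (ev e u)).
Proof. exact: vjoin. Qed.
Lemma vOd (e : nat -> PL n) s u : val (ev e (Od s u)) = val (ev e s) + val (ev e u) - n.
Proof. exact: vodot. Qed.
Lemma vOp (e : nat -> PL n) s u : val (ev e (Op s u)) = minn n (val (ev e s) + val (ev e u)).
Proof. exact: voplus. Qed.
Lemma vZ (e : nat -> PL n) : val (ev e Z0) = 0.
Proof. exact: vzero. Qed.
Lemma vO (e : nat -> PL n) : val (ev e O1) = n.
Proof. exact: vone. Qed.
Lemma vV (e : nat -> PL n) i : val (ev e (V i)) = nat_of_ord (e i).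
Proof. by []. Qed.

Lemma ift (a b : nat) : (if true then a else b) = a. Proof. by []. Qed.

Ltac pid := move=> e; apply: val_inj;
  rewrite ?(vMt, vJn, vOd, vOp, vZ, vO, vV, tauP);
  rewrite ?(vMt, vJn, vOd, vOp, vZ, vO, vV, tauP);
  rewrite ?(vMt, vJn, vOd, vOp, vZ, vO, vV, tauP);
  rewrite ?(vMt, vJn, vOd, vOp, vZ, vO, vV, tauP);
  rewrite /thr ?leq0n ?ift; have := ltn_ord (e 0); have := ltn_ord (e 1); have := ltn_ord (e 2);
  repeat case: ifPn; lia.

Definition Peq t1 t2 := forall e : nat -> PL n, ev e t1 = ev e t2.

Lemma I_meetC : Peq (Mt x y) (Mt y x). Proof. pid. Qed.
Lemma I_joinC : Peq (Jn x y) (Jn y x). Proof. pid. Qed.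
Lemma I_meetA : Peq (Mt x (Mt y w)) (Mt (Mt x y) w). Proof. pid. Qed.
Lemma I_meetI : Peq (Mt x x) x. Proof. pid. Qed.
Lemma I_abs : Peq (Mt x (Jn x y)) x. Proof. pid. Qed.
Lemma I_distr : Peq (Mt (Jn x y) w) (Jn (Mt x w) (Mt y w)). Proof. pid. Qed.
Lemma I_meet0 : Peq (Mt Z0 x) Z0. Proof. pid. Qed.
Lemma I_meet1 : Peq (Mt x O1) x. Proof. pid. Qed.
Lemma I_tmeet k : Peq (tau k (Mt x y)) (Mt (tau k x) (tau k y)). Proof. pid. Qed.
Lemma I_tjoin k : Peq (tau k (Jn x y)) (Jn (tau k x) (tau k y)). Proof. pid. Qed.
Lemma I_tanti j k : j <= k -> Peq (Mt (tau k x) (tau j x)) (tau k x).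
Proof. move=> jk; pid. Qed.
Lemma I_top i j : Peq (Mt (Mt (tau i x) (tau j y)) (tau (minn n (i + j)) (Op x y)))
  (Mt (tau i x) (tau j y)).
Proof. pid. Qed.
Lemma I_tohi p q : Peq (Mt (tau (p + q + 1) (Op x y)) (Jn (tau (p + 1) x) (tau (q + 1) y)))
  (tau (p + q + 1) (Op x y)).
Proof. pid. Qed.
Lemma I_tod i j : Peq (Mt (Mt (tau i x) (tau j y)) (tau (i + j - n) (Od x y)))
  (Mt (tau i x) (tau j y)).
Proof. pid. Qed.
Lemma I_todhi k p q : 1 <= k -> p + q + 1 <= k + n ->
  Peq (Mt (tau k (Od x y)) (Jn (tau (p + 1) x) (tau (q + 1) y))) (tau k (Od x y)).
Proof. move=> k1 kpq; pid. Qed.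
Lemma I_tz k : 1 <= k -> Peq (tau k Z0) Z0. Proof. move=> k1; pid. Qed.
Lemma I_to k : k <= n -> Peq (tau k O1) O1. Proof. move=> kn; pid. Qed.

Definition Y j := Jn (Mt x y) (Mt x (tau j (Mt x y))).
Lemma I_Q1 j : Peq (Jn (Y j.+1) (Mt (Y j) (tau j.+1 (Mt x y)))) (Y j.+1).
Proof. rewrite /Y; pid. Qed.
Lemma I_Q2 j : Peq (Jn (Y j.+1) (Mt (Y j) (tau j.+1 x))) (Y j).
Proof. rewrite /Y; pid. Qed.
Lemma I_Q0 : Peq (Y n) (Mt x y). Proof. rewrite /Y; pid. Qed.
Lemma I_Q3 : Peq (Y 0) x. Proof. rewrite /Y; pid. Qed.
End Ids.


Section Main.
Variables (n : nat) (hn : 1 <= n) (A : alg) (I : Type) (S : power_alg I (PL n) -> Prop)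
  (HS : Defs.closed S) (f : sub_alg HS -> A) (hf : is_hom f)
  (sf : forall a, exists b, f b = a).

Definition env (x y w : A) : nat -> A :=
  fun i => match i with 0 => x | 1 => y | _ => w end.

Let tr t1 t2 (H : Peq n t1 t2) x y w := transfer hf sf H (env x y w).

Local Notation mt := (@a_meet A).
Local Notation jn := (@a_join A).
Local Notation od := (@a_odot A).
Local Notation op := (@a_oplus A).
Local Notation zr := (a_zero A).
Local Notation on := (a_one A).
Local Notation ta k a := (tauA n k (a : A)).

Ltac trh H := let h := fresh in have h := H; rewrite /= ?ev_tau /= in h; exact: h.

Lemma meetC x y : mt x y = mt y x. Proof. trh (tr (@I_meetC n) x y x). Qed.
Lemma joinC x y : jn x y = jn y x. Proof. trh (tr (@I_joinC n) x y x). Qed.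
Lemma meetA x y w : mt x (mt y w) = mt (mt x y) w. Proof. trh (tr (@I_meetA n) x y w). Qed.
Lemma meetI x : mt x x = x. Proof. trh (tr (@I_meetI n) x x x). Qed.
Lemma absorb x y : mt x (jn x y) = x. Proof. trh (tr (@I_abs n) x y x). Qed.
Lemma distr x y w : mt (jn x y) w = jn (mt x w) (mt y w). Proof. trh (tr (@I_distr n) x y w). Qed.
Lemma meet0 x : mt zr x = zr. Proof. trh (tr (@I_meet0 n) x x x). Qed.
Lemma meet1 x : mt x on = x. Proof. trh (tr (@I_meet1 n) x x x). Qed.
Lemma tmeet k x y : ta k (mt x y) = mt (ta k x) (ta k y). Proof. trh (tr (@I_tmeet n k) x y x). Qed.
Lemma tjoin k x y : ta k (jn x y) = jn (ta k x) (ta k y). Proof. trh (tr (@I_tjoin n k) x y x). Qed.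
Lemma tz k : 1 <= k -> ta k zr = zr. Proof. move=> k1; trh (tr (@I_tz n k k1) zr zr zr). Qed.
Lemma tone k : k <= n -> ta k on = on. Proof. move=> k1; trh (tr (@I_to n k k1) on on on). Qed.

Definition le x y := mt x y = x.

Lemma tanti j k x : j <= k -> le (ta k x) (ta j x).
Proof. move=> jk; rewrite /le; trh (tr (@I_tanti n j k jk) x x x). Qed.
Lemma top i j x y : le (mt (ta i x) (ta j y)) (ta (minn n (i + j)) (op x y)).
Proof. rewrite /le; trh (tr (@I_top n i j) x y x). Qed.
Lemma tohi p q x y : le (ta (p + q + 1) (op x y)) (jn (ta (p + 1) x) (ta (q + 1) y)).
Proof. rewrite /le; trh (tr (@I_tohi n p q) x y x). Qed.
Lemma tod i j x y : le (mt (ta i x) (ta j y)) (ta (i + j - n) (od x y)).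
Proof. rewrite /le; trh (tr (@I_tod n i j) x y x). Qed.
Lemma todhi k p q x y : 1 <= k -> p + q + 1 <= k + n ->
  le (ta k (od x y)) (jn (ta (p + 1) x) (ta (q + 1) y)).
Proof. move=> h1 h2; rewrite /le; trh (tr (@I_todhi n k p q h1 h2) x y x). Qed.

Let Yt x w j := jn (mt x w) (mt x (ta j (mt x w))).
Lemma Q1 x w j : jn (Yt x w j.+1) (mt (Yt x w j) (ta j.+1 (mt x w))) = Yt x w j.+1.
Proof. trh (tr (@I_Q1 n j) x w x). Qed.
Lemma Q2 x w j : jn (Yt x w j.+1) (mt (Yt x w j) (ta j.+1 x)) = Yt x w j.
Proof. trh (tr (@I_Q2 n j) x w x). Qed.
Lemma Q0 x w : Yt x w n = mt x w.
Proof. trh (tr (@I_Q0 n) x w x). Qed.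
Lemma Q3 x w : Yt x w 0 = x.
Proof. trh (tr (@I_Q3 n) x w x). Qed.

Lemma key x w : (forall k, ta k x = ta k w) -> x = mt x w.
Proof.
move=> Hxw.
have hz k : ta k (mt x w) = ta k x by rewrite tmeet -Hxw meetI.
have step j : Yt x w j.+1 = Yt x w j by rewrite -[RHS](Q2 x w j) -[ta j.+1 x]hz Q1.
have all j : Yt x w j = x by elim: j => [|j IH]; rewrite ?Q3 // step.
by rewrite -(Q0 x w) all.
Qed.

Lemma le_trans x y z : le x y -> le y z -> le x z.
Proof. by rewrite /le => hxy hyz; rewrite -hxy -meetA hyz. Qed.
Lemma le_meetl x y : le (mt x y) x.
Proof. by rewrite /le meetC meetA meetI. Qed.
Lemma le_meetr x y : le (mt x y) y.
Proof. by rewrite /le -meetA meetI. Qed.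
Lemma le_glb z x y : le z x -> le z y -> le z (mt x y).
Proof. by rewrite /le => hx hy; rewrite meetA hx hy. Qed.
Lemma le_joinl x y : le x (jn x y).
Proof. exact: absorb. Qed.
Lemma le_joinr x y : le y (jn x y).
Proof. by rewrite joinC; apply: le_joinl. Qed.
Lemma le_lub x y z : le x z -> le y z -> le (jn x y) z.
Proof. by rewrite /le => hx hy; rewrite distr hx hy. Qed.
Lemma le_refl x : le x x.
Proof. exact: meetI. Qed.

Definition filt (F : A -> Prop) :=
  (forall x y, F x -> F y -> F (mt x y)) /\ (forall x y, F x -> le x y -> F y).
Definition prime (F : A -> Prop) := forall x y, F (jn x y) -> F x \/ F y.

Lemma meet_mono m1 m2 z t1 t2 : le (mt m1 z) t1 -> le (mt m2 z) t2 ->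
  le (mt (mt m1 m2) z) (mt t1 t2).
Proof.
move=> h1 h2; apply: le_glb.
  apply: le_trans h1; apply: le_glb; last exact: le_meetr.
  exact: le_trans (le_meetl _ _) (le_meetl _ _).
apply: le_trans h2; apply: le_glb; last exact: le_meetr.
exact: le_trans (le_meetl _ _) (le_meetr _ _).
Qed.

Lemma pft a b : ~ le a b -> exists F, filt F /\ prime F /\ F a /\ ~ F b.
Proof.
move=> nab.
pose P := fun X : A -> Prop => filt X /\ ~ X b /\ ((exists z, X z) -> X a).
have [M [[[Mm Mu] [Mb Ma]] Mmax]] : exists M, P M /\
    forall B, classical_sets.proper M B -> ~ P B.
  apply: classical_sets.Zorn_bigcup => F FP Ftot.
  split; [split|split].
  - move=> x y [X FX Xx] [Y FY Yy].
    have [XY|YX] := Ftot X Y FX FY.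
    + have [[Ym _] _] := FP Y FY; exists Y => //; apply: Ym => //; exact: XY.
    + have [[Xm _] _] := FP X FX; exists X => //; apply: Xm => //; exact: YX.
  - move=> x y [X FX Xx] xy; have [[_ Xu] _] := FP X FX; exists X => //; exact: Xu xy.
  - by move=> [X FX Xb]; have [_ [XB _]] := FP X FX; exact: XB.
  - move=> [z [X FX Xz]]; have [_ [_ Xa]] := FP X FX; exists X => //; apply: Xa; by exists z.
have PU : P (le a).
  split; [split|split].
  - exact: le_glb.
  - move=> x y ax xy; exact: le_trans ax xy.
  - exact: nab.
  - by move=> _; apply: le_refl.
have Ma' : M a.
  apply: NNPP => nMa; apply: (Mmax (le a)) PU; split.
    by move=> z Mz; exfalso; apply: nMa; apply: Ma; exists z.
  by move=> h; apply: nMa; apply: h; apply: le_refl.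
exists M; split; first by split.
split=> //.
move=> x y Mxy; apply: NNPP => H.
have nMx : ~ M x by move=> Mx; apply: H; left.
have nMy : ~ M y by move=> My; apply: H; right.
pose G z := fun t => exists2 m, M m & le (mt m z) t.
have Gb z : ~ M z -> G z b.
  move=> nMz; apply: NNPP => nGb; apply: (Mmax (G z)).
    split.
      by move=> m Mm'; exists m => //; apply: le_meetl.
    move=> h; apply: nMz; apply: h; exists a => //; exact: le_meetr.
  split; [split|split] => //.
  - move=> t1 t2 [m1 M1 h1] [m2 M2 h2]; exists (mt m1 m2); first exact: Mm.
    exact: meet_mono.
  - move=> t1 t2 [m M1 h1] h2; exists m => //; exact: le_trans h1 h2.
  - by move=> _; exists a => //; apply: le_meetl.
have [m1 M1 h1] := Gb x nMx.
have [m2 M2 h2] := Gb y nMy.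
apply: Mb; apply: (Mu (mt (jn x y) (mt m1 m2))); first exact: (Mm _ _ Mxy (Mm _ _ M1 M2)).
rewrite distr; apply: le_lub.
  apply: le_trans h1; apply: le_glb; last exact: le_meetl.
  exact: le_trans (le_meetr _ _) (le_meetl _ _).
apply: le_trans h2; apply: le_glb; last exact: le_meetl.
exact: le_trans (le_meetr _ _) (le_meetr _ _).
Qed.

Lemma eq_from_le (m m' : nat) : (forall k, k <= m <-> k <= m') -> m = m'.
Proof.
move=> H; apply/eqP; rewrite eqn_leq; apply/andP; split.
  by apply/(H m).
by apply/(H m').
Qed.

Section HomF.
Variables (F : A -> Prop) (Ff : filt F) (Fp : prime F) (a0 b0 : A)
  (Fa : F a0) (Fb : ~ F b0).

Lemma F1 : F on.
Proof. by apply: Ff.2 Fa _; apply: meet1. Qed.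
Lemma Fnz : ~ F zr.
Proof. by move=> F0; apply: Fb; apply: Ff.2 F0 _; apply: meet0. Qed.
Lemma Fmeet x y : F (mt x y) <-> F x /\ F y.
Proof.
split; last by case; apply: Ff.1.
by move=> h; split; apply: Ff.2 h _; [apply: le_meetl | apply: le_meetr].
Qed.
Lemma Fup x y : F x -> le x y -> F y.
Proof. exact: Ff.2. Qed.

Definition cnt x := find (fun j => ~~ boolp.asbool (F (ta j.+1 x))) (iota 0 n).

Lemma cnt_le x : cnt x <= n.
Proof. by rewrite /cnt (leq_trans (find_size _ _)) // size_iota. Qed.

Lemma cntP x k : k <= cnt x <-> F (ta k x).
Proof.
have cn := cnt_le x.
case: (posnP k) => [->|k0]; first by split => // _; rewrite tauA0; exact: F1.
case: (leqP k n) => kn; last first.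
  split => [|]; first lia.
  by rewrite tauA_big // => /Fnz.
split.
  move=> kc.
  have := @before_find _ 0 (fun j => ~~ boolp.asbool (F (ta j.+1 x))) (iota 0 n) k.-1.
  rewrite -/(cnt x) nth_iota; last lia.
  rewrite add0n prednK // => /(_ ltac:(lia)) /negbFE /boolp.asboolP //.
move=> Fk; rewrite leqNgt; apply/negP => ck.
have hs : has (fun j => ~~ boolp.asbool (F (ta j.+1 x))) (iota 0 n).
  by rewrite has_find size_iota -/(cnt x); lia.
have := nth_find 0 hs; rewrite -/(cnt x) nth_iota; last lia.
rewrite add0n => /negP; apply; apply/boolp.asboolP.
by apply: Fup Fk _; apply: tanti.
Qed.

Definition hF (x : A) : PL n := inord (cnt x).

Lemma hv x : val (hF x) = cnt x.
Proof. by rewrite /hF /= inordK // ltnS cnt_le. Qed.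

Lemma hF_hom : is_hom hF.
Proof.
split; [|split; [|split; [|split; [|split]]]].
- move=> x y; apply: val_inj; rewrite vmeet !hv; apply: eq_from_le => k; split.
    by move/cntP; rewrite tmeet => /Fmeet [/cntP h1 /cntP h2]; rewrite leq_min h1 h2.
  by rewrite leq_min => /andP[/cntP h1 /cntP h2]; apply/cntP; rewrite tmeet; exact/Fmeet.
- move=> x y; apply: val_inj; rewrite vjoin !hv; apply: eq_from_le => k; split.
    move/cntP; rewrite tjoin => /Fp [/cntP h1|/cntP h2]; rewrite leq_max ?h1 ?h2 //.
    by rewrite orbT.
  rewrite leq_max => /orP[/cntP h1|/cntP h2]; apply/cntP; rewrite tjoin.
    by apply: Fup h1 _; apply: le_joinl.
  by apply: Fup h2 _; apply: le_joinr.
- move=> x y; apply: val_inj; rewrite vodot !hv; apply: eq_from_le => k; split.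
    move/cntP => Fk; case: (posnP k) => [->//|k0].
    rewrite leqNgt; apply/negP => lt.
    have := Fup Fk (@todhi k (cnt x) (cnt y) x y ltac:(lia) ltac:(lia)).
    by case/Fp => /cntP; lia.
  move=> hk; apply/cntP.
  have h1 : F (mt (ta (cnt x) x) (ta (cnt y) y)) by apply/Fmeet; split; apply/cntP.
  apply: Fup (Fup h1 (tod _ _ _ _)) _; apply: tanti; lia.
- move=> x y; apply: val_inj; rewrite voplus !hv; apply: eq_from_le => k; split.
    move/cntP => Fk.
    have kn : k <= n.
      by rewrite leqNgt; apply/negP => kn; move: Fk; rewrite tauA_big // => /Fnz.
    rewrite leq_min kn /= leqNgt; apply/negP => lt.
    have := Fup (Fup Fk (@tanti (cnt x + cnt y + 1) k (op x y) ltac:(lia))) (tohi (cnt x) (cnt y) x y).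
    by case/Fp => /cntP; lia.
  move=> hk; apply/cntP.
  have h1 : F (mt (ta (minn k (cnt x)) x) (ta (k - minn k (cnt x)) y)).
    by apply/Fmeet; split; apply/cntP; lia.
  have := Fup h1 (top _ _ _ _).
  by have -> : minn n (minn k (cnt x) + (k - minn k (cnt x))) = k by lia.
- apply: (@ord_inj n.+1); rewrite vzero hv; apply: eq_from_le => k; split;
    last by rewrite leqn0 => /eqP ->.
  move/cntP; case: (posnP k) => [->//|k0].
  by rewrite tz // => /Fnz.
- apply: (@ord_inj n.+1); rewrite vone hv; apply: eq_from_le => k; split.
    by move=> h; apply: leq_trans h (cnt_le _).
  by move=> kn; apply/cntP; rewrite tone //; exact: F1.
Qed.

End HomF.

Lemma sep a1 a2 : a1 <> a2 -> exists h : A -> PL n, is_hom h /\ h a1 <> h a2.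
Proof.
move=> ne.
have [k hk] : exists k, ta k a1 <> ta k a2.
  apply: NNPP => H; apply: ne.
  have Hk k : ta k a1 = ta k a2 by apply: NNPP => nk; apply: H; exists k.
  rewrite (key Hk) [in RHS](key (fun k => esym (Hk k))); exact: meetC.
have nle : ~ le (ta k a1) (ta k a2) \/ ~ le (ta k a2) (ta k a1).
  apply: NNPP => H; apply: hk.
  have h1 : le (ta k a1) (ta k a2) by apply: NNPP => h; apply: H; left.
  have h2 : le (ta k a2) (ta k a1) by apply: NNPP => h; apply: H; right.
  by rewrite -h1 meetC h2.
case: nle => [/pft [F [Ff [Fp [Fu Fv]]]]|/pft [F [Ff [Fp [Fu Fv]]]]];
  exists (hF F); split; try exact: (hF_hom Ff Fp Fu Fv);
  move=> /(congr1 val); rewrite !hv => E.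
  by apply Fv; apply/(cntP Ff Fu Fv); rewrite -E; apply/(cntP Ff Fu Fv).
by apply Fv; apply/(cntP Ff Fu Fv); rewrite E; apply/(cntP Ff Fu Fv).
Qed.

End Main.


Theorem corollary3p6 (n : nat) (hn : 1 <= n) (A : alg) :
  in_HSP (PL n) A <-> in_ISP (PL n) A.
Proof.
split.
  move=> [I [S [HS [f [hf sf]]]]].
  pose J := {h : A -> PL n | is_hom h}.
  exists J, (fun a (j : J) => proj1_sig j a); split.
    split; [|split; [|split; [|split; [|split]]]];
      try (move=> x y); apply: functional_extensionality => -[h [hm [hj [ho [hp [h0 h1]]]]]] /=;
      by [rewrite hm|rewrite hj|rewrite ho|rewrite hp|rewrite h0|rewrite h1].
  move=> a1 a2 E; apply: NNPP => ne.
  have [h [hh hne]] := sep hn hf sf ne.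
  by apply: hne; have := congr1 (fun F => F (exist _ h hh)) E.
move=> [J [g [hg ginj]]].
have [hm [hj [ho [hp [h0 h1]]]]] := hg.
pose S := fun x : power_alg J (PL n) => exists a, g a = x.
have HS : Defs.closed S.
  split.
  - by move=> _ _ [a <-] [b <-]; exists (a_meet a b).
  - by move=> _ _ [a <-] [b <-]; exists (a_join a b).
  - by move=> _ _ [a <-] [b <-]; exists (a_odot a b).
  - by move=> _ _ [a <-] [b <-]; exists (a_oplus a b).
  - by exists (a_zero A).
  - by exists (a_one A).
pose f := fun s : sub_alg HS => proj1_sig (boolp.cid (proj2_sig s)).
have fP s : g (f s) = proj1_sig s by rewrite /f; case: boolp.cid.
exists J, S, HS, f; split.
  split; [|split; [|split; [|split; [|split]]]]; try move=> x y; apply: ginj;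
  by rewrite ?hm ?hj ?ho ?hp ?h0 ?h1 !fP.
by move=> a; exists (exist S (g a) (ex_intro _ a erefl)); apply: ginj; rewrite fP.
Qed.
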